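(* (a) For every positive function $\varphi(t)$ and every function $Q(r)$, the metric $$ds^2=-\varphi^3(t)dt^2+\varphi(t)\big([t\,Q(r)+1]^2dr^2+dx^2+dy^2\big)$$ is a plane-symmetric perfect fluid solution with $u=\varphi^{-3/2}\partial_t$, pressure $p=\varphi^{-3}\left[\frac74\frac{\dot\varphi^2}{\varphi^2}-\frac{\ddot\varphi}{\varphi}\right]$ and energy density $\rho=\varphi^{-3}\left[\frac34\frac{\dot\varphi^2}{\varphi^2}+\frac{\dot\varphi Q}{\varphi(tQ+1)}\right]$. (b) Conversely, every solution $(\varphi(t),\alpha(t,r),v(t))$, $v,\varphi>0$, of $2v\varphi\ddot\alpha+(\dot v\varphi+3v\dot\varphi)\dot\alpha=0$ with $\alpha=\alpha_1(t)+\alpha_2(t)Q(r)$, $\alpha_2$ non-constant, defines (via $ds^2=-v^{-1}dt^2+\varphi[\alpha^2dr^2+dx^2+dy^2]$) a metric which, after a change of the time coordinate, constant rescalings of $\varphi$ and of the spatial coordinates, and a redefinition of $r$ and $Q$, takes the form in (a).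
   Context: Dot denotes $d/dt$. The equation in (b) is the perfect fluid field equation for the $k=0$ T-models written in the variables $(\varphi,\alpha,v)$. *)

(* Defs.v *)
From Stdlib Require Import Reals Lra.
From Coquelicot Require Import Coquelicot.
Open Scope R_scope.

(** Points of spacetime in coordinates (x^0,x^1,x^2,x^3) = (t,r,x,y);
    only the indices 0..3 are used. *)
Definition pt := nat -> R.

Definition mkpt (t r x y : R) : pt :=
  fun i => match i with 0%nat => t | 1%nat => r | 2%nat => x | _ => y end.

Definition Metric := nat -> nat -> pt -> R.

Definition upd (x : pt) (i : nat) (s : R) : pt :=
  fun j => if Nat.eqb j i then s else x j.

Definition pd (f : pt -> R) (i : nat) (x : pt) : R :=
  Derive (fun s => f (upd x i s)) (x i).

Definition sum4 (f : nat -> R) : R := f 0%nat + f 1%nat + f 2%nat + f 3%nat.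

Definition christoffel (g gi : Metric) (a b c : nat) (x : pt) : R :=
  / 2 * sum4 (fun d => gi a d x * (pd (g d c) b x + pd (g d b) c x - pd (g b c) d x)).

(** Ricci tensor R_{bd} = R^a_{bad},
    R^a_{bcd} = d_c Gamma^a_{db} - d_d Gamma^a_{cb} + Gamma^a_{ce} Gamma^e_{db} - Gamma^a_{de} Gamma^e_{cb}. *)
Definition ricci (g gi : Metric) (b d : nat) (x : pt) : R :=
  sum4 (fun a =>
    pd (christoffel g gi a d b) a x - pd (christoffel g gi a a b) d x
    + sum4 (fun e => christoffel g gi a a e x * christoffel g gi e d b x
                     - christoffel g gi a d e x * christoffel g gi e a b x)).

Definition scalar_curv (g gi : Metric) (x : pt) : R :=
  sum4 (fun b => sum4 (fun d => gi b d x * ricci g gi b d x)).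

Definition einstein (g gi : Metric) (a b : nat) (x : pt) : R :=
  ricci g gi a b x - / 2 * scalar_curv g gi x * g a b x.

Definition is_inverse_metric_at (g gi : Metric) (x : pt) : Prop :=
  forall a c, (a < 4)%nat -> (c < 4)%nat ->
    sum4 (fun b => g a b x * gi b c x) = if Nat.eqb a c then 1 else 0.

Definition near (x : pt) (P : pt -> Prop) : Prop :=
  exists eps, 0 < eps /\
    forall y, (forall i, (i < 4)%nat -> Rabs (y i - x i) < eps) -> P y.

Definition ulow (g : Metric) (u : nat -> pt -> R) (a : nat) (x : pt) : R :=
  sum4 (fun b => g a b x * u b x).

(** Perfect fluid solution at the point x (units 8 pi G = 1):
    G_{ab} = (rho + p) u_a u_b + p g_{ab}, with g(u,u) = -1. *)
Definition perfect_fluid_at (g : Metric) (u : nat -> pt -> R) (rho p : pt -> R)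
    (x : pt) : Prop :=
  exists gi : Metric,
    near x (is_inverse_metric_at g gi) /\
    sum4 (fun a => u a x * ulow g u a x) = -1 /\
    forall a b, (a < 4)%nat -> (b < 4)%nat ->
      einstein g gi a b x = (rho x + p x) * ulow g u a x * ulow g u b x + p x * g a b x.

Definition metricA (phi Q : R -> R) : Metric :=
  fun a b x =>
    match a, b with
    | 0%nat, 0%nat => - (phi (x 0%nat)) ^ 3
    | 1%nat, 1%nat => phi (x 0%nat) * (x 0%nat * Q (x 1%nat) + 1) ^ 2
    | 2%nat, 2%nat => phi (x 0%nat)
    | 3%nat, 3%nat => phi (x 0%nat)
    | _, _ => 0
    end.

Definition uA (phi : R -> R) : nat -> pt -> R :=
  fun a x => match a with 0%nat => / sqrt ((phi (x 0%nat)) ^ 3) | _ => 0 end.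

Definition pA (phi : R -> R) : pt -> R :=
  fun x => let t := x 0%nat in
    / (phi t) ^ 3 * (7 / 4 * (Derive phi t) ^ 2 / (phi t) ^ 2
                     - Derive (Derive phi) t / phi t).

Definition rhoA (phi Q : R -> R) : pt -> R :=
  fun x => let t := x 0%nat in let r := x 1%nat in
    / (phi t) ^ 3 * (3 / 4 * (Derive phi t) ^ 2 / (phi t) ^ 2
                     + Derive phi t * Q r / (phi t * (t * Q r + 1))).

Definition metricB (v phi : R -> R) (alpha : R -> R -> R) : Metric :=
  fun a b x =>
    match a, b with
    | 0%nat, 0%nat => - / v (x 0%nat)
    | 1%nat, 1%nat => phi (x 0%nat) * (alpha (x 0%nat) (x 1%nat)) ^ 2
    | 2%nat, 2%nat => phi (x 0%nat)
    | 3%nat, 3%nat => phi (x 0%nat)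
    | _, _ => 0
    end.

(** Pullback of a metric g along a coordinate change F (new coords = F(old)):
    (F^* g)_{ab}(y) = sum_{c,d} dF^c/dy^a dF^d/dy^b g_{cd}(F y). *)
Definition pullback (g : Metric) (F : pt -> pt) : Metric :=
  fun a b y =>
    sum4 (fun c => sum4 (fun d =>
      pd (fun z => F z c) a y * pd (fun z => F z d) b y * g c d (F y))).

Definition in_I (lo hi : Rbar) (t : R) : Prop := Rbar_lt lo t /\ Rbar_lt t hi.

(* Main.v *)
Require Import Defs.
From Stdlib Require Import Reals Lra Lia ClassicalEpsilon.
From Coquelicot Require Import Coquelicot.
Open Scope R_scope.

Definition giA (phi Q : R -> R) : Metric := fun a b z =>
  match a, b with
  | 0%nat, 0%nat => - / (phi (z 0%nat)) ^ 3
  | 1%nat, 1%nat => / (phi (z 0%nat) * (z 0%nat * Q (z 1%nat) + 1) ^ 2)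
  | 2%nat, 2%nat => / phi (z 0%nat)
  | 3%nat, 3%nat => / phi (z 0%nat)
  | _, _ => 0 end.

Definition dgA (phi Q : R -> R) (c d i : nat) (z : pt) : R :=
  let t := z 0%nat in let q := Q (z 1%nat) in let W := t * q + 1 in
  match c, d, i with
  | 0%nat, 0%nat, 0%nat => - (3 * phi t ^ 2 * Derive phi t)
  | 1%nat, 1%nat, 0%nat => Derive phi t * W ^ 2 + phi t * (2 * W * q)
  | 1%nat, 1%nat, 1%nat => phi t * (2 * W * (t * Derive Q (z 1%nat)))
  | 2%nat, 2%nat, 0%nat => Derive phi t
  | 3%nat, 3%nat, 0%nat => Derive phi t
  | _, _, _ => 0 end.

Ltac side := repeat split; try assumption.

Ltac etaN := repeat match goal with |- context [fun x : R => ?f x] => change (fun x : R => f x) with f end.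

Lemma pd_metricA (phi Q : R -> R) c d i z : ex_derive phi (z 0%nat) -> ex_derive Q (z 1%nat) ->
  pd (metricA phi Q c d) i z = dgA phi Q c d i z.
Proof.
intros H1 H2.
destruct c as [|[|[|[|c]]]]; destruct d as [|[|[|[|d]]]]; destruct i as [|[|i]];
unfold pd, metricA, dgA, upd; simpl;
first [ apply Derive_const
      | (apply is_derive_unique; auto_derive; [side | etaN; ring]) ].
Qed.

Definition Gam (phi Q : R -> R) (a b c : nat) (z : pt) : R :=
  let t := z 0%nat in let q := Q (z 1%nat) in let W := t * q + 1 in
  let f := phi t in let df := Derive phi t in
  match a, b, c with
  | 0%nat, 0%nat, 0%nat => 3 * df / (2 * f)
  | 0%nat, 1%nat, 1%nat => (df * W ^ 2 + 2 * f * W * q) / (2 * f ^ 3)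
  | 0%nat, 2%nat, 2%nat => df / (2 * f ^ 3)
  | 0%nat, 3%nat, 3%nat => df / (2 * f ^ 3)
  | 1%nat, 0%nat, 1%nat => (df * W + 2 * f * q) / (2 * f * W)
  | 1%nat, 1%nat, 0%nat => (df * W + 2 * f * q) / (2 * f * W)
  | 1%nat, 1%nat, 1%nat => t * Derive Q (z 1%nat) / W
  | 2%nat, 0%nat, 2%nat => df / (2 * f)
  | 2%nat, 2%nat, 0%nat => df / (2 * f)
  | 3%nat, 0%nat, 3%nat => df / (2 * f)
  | 3%nat, 3%nat, 0%nat => df / (2 * f)
  | _, _, _ => 0 end.

Lemma chr_eq (phi Q : R -> R) a b c z : ex_derive phi (z 0%nat) -> ex_derive Q (z 1%nat) ->
  phi (z 0%nat) <> 0 -> z 0%nat * Q (z 1%nat) + 1 <> 0 ->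
  christoffel (metricA phi Q) (giA phi Q) a b c z = Gam phi Q a b c z.
Proof.
intros H1 H2 H3 H4.
unfold christoffel, sum4. rewrite !pd_metricA by assumption.
destruct a as [|[|[|[|a]]]]; destruct b as [|[|[|[|b]]]]; destruct c as [|[|[|[|c]]]];
unfold giA, dgA, Gam; simpl; field; auto.
Qed.

Lemma in_I_open lo hi t : in_I lo hi t -> exists e : posreal, forall t', Rabs (t' - t) < e -> in_I lo hi t'.
Proof.
intros H.
assert (Ho : open (in_I lo hi)) by (apply open_and; [apply open_Rbar_gt | apply open_Rbar_lt]).
destruct (Ho t H) as [e He]. exists e. intros t' Ht'. apply He. exact Ht'.
Qed.

Lemma cont_eps (Q : R -> R) r : continuous Q r -> forall e : posreal,
  exists d : posreal, forall r', Rabs (r' - r) < d -> Rabs (Q r' - Q r) < e.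
Proof.
intros H e. destruct (proj1 (@filterlim_locally _ _ (locally r) _ Q (Q r)) H e) as [d Hd].
exists d. intros r' Hr. apply (Hd r' Hr).
Qed.

Lemma W_near (Q : R -> R) t r : continuous Q r -> t * Q r + 1 <> 0 ->
  exists e : posreal, forall t' r', Rabs (t' - t) < e -> Rabs (r' - r) < e -> t' * Q r' + 1 <> 0.
Proof.
intros HQ HW.
set (c := Rabs (t * Q r + 1)).
assert (Hc : 0 < c) by (apply Rabs_pos_lt; exact HW).
assert (He1 : 0 < c / (2 * (Rabs t + 1))) by (apply Rdiv_lt_0_compat; [lra | pose proof (Rabs_pos t); lra]).
destruct (cont_eps Q r HQ (mkposreal _ He1)) as [d Hd]. simpl in Hd.
set (K := Rabs (Q r) + c / (2 * (Rabs t + 1)) + 1).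
assert (HK : 0 < K) by (unfold K; pose proof (Rabs_pos (Q r)); lra).
assert (He2 : 0 < Rmin d (c / (2 * K))) by (apply Rmin_pos; [apply cond_pos | apply Rdiv_lt_0_compat; lra]).
exists (mkposreal _ He2). simpl. intros t' r' Ht Hr.
pose proof (Rmin_l d (c / (2 * K))) as Hm1. pose proof (Rmin_r d (c / (2 * K))) as Hm2.
specialize (Hd r' ltac:(lra)).
intros Hz.
assert (Heq : t' * Q r' + 1 - (t * Q r + 1) = (t' - t) * Q r' + t * (Q r' - Q r)) by ring.
assert (H1 : Rabs ((t' - t) * Q r') <= Rabs (t' - t) * K).
{ rewrite Rabs_mult. apply Rmult_le_compat_l; [apply Rabs_pos|].
  replace (Q r') with (Q r + (Q r' - Q r)) by ring.
  pose proof (Rabs_triang (Q r) (Q r' - Q r)). unfold K. lra. }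
assert (H2 : Rabs (t * (Q r' - Q r)) <= Rabs t * (c / (2 * (Rabs t + 1)))).
{ rewrite Rabs_mult. apply Rmult_le_compat_l; [apply Rabs_pos| lra]. }
assert (H3 : Rabs t * (c / (2 * (Rabs t + 1))) < c / 2).
{ pose proof (Rabs_pos t). apply (Rmult_lt_reg_r (2 * (Rabs t + 1))); [lra|].
  field_simplify; [|lra]. nra. }
assert (H4 : Rabs (t' - t) * K <= c / 2).
{ apply Rle_trans with (c / (2 * K) * K); [apply Rmult_le_compat_r; lra|].
  right; field; lra. }
pose proof (Rabs_triang ((t' - t) * Q r') (t * (Q r' - Q r))).
rewrite <- Heq, Hz in H. rewrite Rminus_0_l, Rabs_Ropp in H. fold c in H. lra.
Qed.

Ltac nzs := repeat split; try assumption; try (repeat apply Rmult_integral_contrapositive_currified; try assumption; lra).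

Ltac der1 :=
  match goal with
  | |- context [Derive ?F ?t0] =>
    lazymatch F with
    | fun x => ?g x => fail
    | fun x => _ => idtac
    end;
    erewrite (is_derive_unique F t0); [| auto_derive; [nzs | reflexivity]]
  end.


Lemma partA : forall (lo hi : Rbar) (phi Q : R -> R),
     (forall t, in_I lo hi t ->
        0 < phi t /\ ex_derive phi t /\ ex_derive (Derive phi) t) ->
     (forall r, ex_derive Q r /\ ex_derive (Derive Q) r) ->
     forall t r x y, in_I lo hi t -> t * Q r + 1 <> 0 ->
       perfect_fluid_at (metricA phi Q) (uA phi) (rhoA phi Q) (pA phi)
         (mkpt t r x y).
Proof.
intros lo hi phi Q Hphi HQ t r x y Ht HW.
destruct (in_I_open lo hi t Ht) as [e1 He1].
destruct (W_near Q t r (ex_derive_continuous _ _ (proj1 (HQ r))) HW) as [e2 He2].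
assert (He : 0 < Rmin e1 e2) by (apply Rmin_pos; apply cond_pos).
set (e := mkposreal _ He).
assert (Near : forall t' r', Rabs (t' - t) < e -> Rabs (r' - r) < e ->
   in_I lo hi t' /\ 0 < phi t' /\ ex_derive phi t' /\ ex_derive Q r' /\ t' * Q r' + 1 <> 0).
{ intros t' r' H1 H2. simpl in H1, H2.
  pose proof (Rmin_l e1 e2). pose proof (Rmin_r e1 e2).
  assert (Hi : in_I lo hi t') by (apply He1; lra).
  destruct (Hphi t' Hi) as [Hp [Hd _]].
  refine (conj Hi (conj Hp (conj Hd (conj (proj1 (HQ r')) _)))). apply He2; lra. }
assert (chrZ : forall z, Rabs (z 0%nat - t) < e -> Rabs (z 1%nat - r) < e ->
   forall a b c, christoffel (metricA phi Q) (giA phi Q) a b c z = Gam phi Q a b c z).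
{ intros z H1 H2 a b c. destruct (Near _ _ H1 H2) as [_ [Hp [Hd [Hq Hw]]]].
  apply chr_eq; auto; lra. }
assert (Rt : Rabs (t - t) < e) by (rewrite Rminus_eq_0, Rabs_R0; apply cond_pos).
assert (Rr : Rabs (r - r) < e) by (rewrite Rminus_eq_0, Rabs_R0; apply cond_pos).
assert (chrX : forall a b c, christoffel (metricA phi Q) (giA phi Q) a b c (mkpt t r x y)
   = Gam phi Q a b c (mkpt t r x y)) by (apply chrZ; simpl; auto).
assert (pdchr : forall a b c i, pd (christoffel (metricA phi Q) (giA phi Q) a b c) i (mkpt t r x y)
   = pd (Gam phi Q a b c) i (mkpt t r x y)).
{ intros a b c i. unfold pd. apply Derive_ext_loc. exists e. intros s Hs.
  change (Rabs (s - mkpt t r x y i) < e) in Hs.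
  apply chrZ; destruct i as [|[|i]]; simpl in *; auto. }
destruct (Hphi t Ht) as [Hf [Hd1 Hd2]].
destruct (HQ r) as [Hq1 Hq2].
assert (Hf0 : phi t <> 0) by lra.
assert (Hs3 : 0 < sqrt (phi t ^ 3)) by (apply sqrt_lt_R0; apply pow_lt; exact Hf).
assert (Hss : sqrt (phi t ^ 3) * sqrt (phi t ^ 3) = phi t ^ 3) by (apply sqrt_sqrt; left; apply pow_lt; exact Hf).
assert (u0 : ulow (metricA phi Q) (uA phi) 0 (mkpt t r x y) = - sqrt (phi t ^ 3)).
{ unfold ulow, sum4, metricA, uA, mkpt; cbv beta iota.
  set (s := sqrt (phi t ^ 3)) in *. rewrite <- Hss. field. lra. }
assert (u00 : ulow (metricA phi Q) (uA phi) 0 (mkpt t r x y) * ulow (metricA phi Q) (uA phi) 0 (mkpt t r x y) = phi t ^ 3).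
{ rewrite u0. set (s := sqrt (phi t ^ 3)) in *. rewrite <- Hss. ring. }
assert (u1 : ulow (metricA phi Q) (uA phi) 1 (mkpt t r x y) = 0)
  by (unfold ulow, sum4, metricA, uA, mkpt; cbv beta iota; ring).
assert (u2 : ulow (metricA phi Q) (uA phi) 2 (mkpt t r x y) = 0)
  by (unfold ulow, sum4, metricA, uA, mkpt; cbv beta iota; ring).
assert (u3 : ulow (metricA phi Q) (uA phi) 3 (mkpt t r x y) = 0)
  by (unfold ulow, sum4, metricA, uA, mkpt; cbv beta iota; ring).
exists (giA phi Q). split; [|split].
- exists e; split; [apply cond_pos|]. intros z Hz a c Ha Hc.
  pose proof (Hz 0%nat ltac:(lia)) as Hz0. pose proof (Hz 1%nat ltac:(lia)) as Hz1.
  simpl in Hz0, Hz1.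
  destruct (Near (z 0%nat) (z 1%nat) Hz0 Hz1) as [_ [Hp [_ [_ Hw]]]].
  destruct a as [|[|[|[|a]]]]; [..|lia]; destruct c as [|[|[|[|c]]]]; try lia;
  unfold sum4, metricA, giA; simpl; field; auto; lra.
- unfold sum4 at 1. rewrite u0, u1, u2, u3. unfold uA, mkpt; cbv beta iota. field. lra.
- intros a b Ha Hb.
  destruct a as [|[|[|[|a]]]]; [..|lia]; destruct b as [|[|[|[|b]]]]; try lia;
  rewrite ?Rmult_assoc, ?u00, ?u1, ?u2, ?u3;
  unfold einstein, scalar_curv, sum4; simpl;
  rewrite ?Rmult_0_l, ?Rplus_0_l, ?Rplus_0_r;
  unfold ricci, sum4; rewrite !pdchr, !chrX; unfold pd, upd, Gam; simpl;
  repeat der1; etaN; unfold rhoA, pA; simpl; field; nzs.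
Qed.

Lemma ball_between c e u1 u2 x : Rabs (u1 - c) < e -> Rabs (u2 - c) < e ->
  Rmin u1 u2 <= x <= Rmax u1 u2 -> Rabs (x - c) < e.
Proof.
intros H1 H2 H3. apply Rabs_def2 in H1. apply Rabs_def2 in H2.
unfold Rmin, Rmax in H3. destruct (Rle_dec u1 u2); apply Rabs_def1; lra.
Qed.

Lemma const_ball (f : R -> R) c e : (forall s, Rabs (s - c) < e -> is_derive f s 0) ->
  forall s, Rabs (s - c) < e -> f s = f c.
Proof.
intros H s Hs. pose proof (Rabs_def2 _ _ Hs) as [Hs1 Hs2].
destruct (Rtotal_order s c) as [Hl|[Heq|Hg]].
- apply (eq_is_derive f s c); auto. intros t Ht. apply H. apply Rabs_def1; lra.
- subst; reflexivity.
- symmetry. apply (eq_is_derive f c s); auto. intros t Ht. apply H. apply Rabs_def1; lra.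
Qed.

Lemma inj_ball (f df : R -> R) c e :
  (forall u, Rabs (u - c) < e -> is_derive f u (df u)) ->
  (forall u, Rabs (u - c) < e -> df u <> 0) ->
  forall u1 u2, Rabs (u1 - c) < e -> Rabs (u2 - c) < e -> f u1 = f u2 -> u1 = u2.
Proof.
intros H Hn u1 u2 H1 H2 Hf. destruct (Req_dec u1 u2) as [|Hne]; auto. exfalso.
destruct (MVT_gen f u1 u2 df) as [x [Hx Heq]].
- intros x Hx. apply H. apply (ball_between c e u1 u2); auto; lra.
- intros x Hx. apply continuity_pt_filterlim. apply (ex_derive_continuous f x).
  exists (df x). apply H. apply (ball_between c e u1 u2); auto.
- rewrite Hf, Rminus_eq_0 in Heq. symmetry in Heq.
  apply Rmult_integral in Heq. destruct Heq as [Heq|Heq].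
  + apply (Hn x); auto. apply (ball_between c e u1 u2); auto.
  + apply Hne. lra.
Qed.

Definition inv_on (f : R -> R) (c e s : R) : R :=
  epsilon (inhabits 0) (fun u => Rabs (u - c) < e /\ f u = s).

Lemma inv_on_spec (f : R -> R) c e :
  (forall u1 u2, Rabs (u1 - c) < e -> Rabs (u2 - c) < e -> f u1 = f u2 -> u1 = u2) ->
  forall u, Rabs (u - c) < e -> inv_on f c e (f u) = u.
Proof.
intros Hi u Hu. unfold inv_on.
destruct (epsilon_spec (inhabits 0) (fun u' => Rabs (u' - c) < e /\ f u' = f u)
  (ex_intro _ u (conj Hu eq_refl))) as [H1 H2].
apply Hi; auto.
Qed.

Lemma partB : (forall (lo hi : Rbar) (phi v al1 al2 Q : R -> R),
     (forall t, in_I lo hi t ->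
        0 < phi t /\ 0 < v t /\ ex_derive phi t /\ ex_derive v t /\
        ex_derive al1 t /\ ex_derive (Derive al1) t /\
        ex_derive al2 t /\ ex_derive (Derive al2) t) ->
     (forall r, continuous Q r) ->
     (exists t1 t2, in_I lo hi t1 /\ in_I lo hi t2 /\ al2 t1 <> al2 t2) ->
     let alpha := fun t r => al1 t + al2 t * Q r in
     (forall t r, in_I lo hi t ->
        2 * v t * phi t * Derive (Derive (fun s => alpha s r)) t
        + (Derive v t * phi t + 3 * v t * Derive phi t)
          * Derive (fun s => alpha s r) t = 0) ->
     forall t0 r0, in_I lo hi t0 -> alpha t0 r0 <> 0 ->
     exists eps (T Rr phit Qt : R -> R) (k lam : R),
       0 < eps /\ 0 < k /\ 0 < lam /\
       (forall t, Rabs (t - t0) < eps ->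
          in_I lo hi t /\ ex_derive T t /\ Derive T t <> 0 /\
          0 < phit (T t) /\ phit (T t) = k * phi t) /\
       (forall r, Rabs (r - r0) < eps -> ex_derive Rr r /\ Derive Rr r <> 0) /\
       (forall t r x y, Rabs (t - t0) < eps -> Rabs (r - r0) < eps ->
          forall a b, (a < 4)%nat -> (b < 4)%nat ->
            metricB v phi alpha a b (mkpt t r x y)
            = pullback (metricA phit Qt)
                (fun z => mkpt (T (z 0%nat)) (Rr (z 1%nat)) (lam * z 2%nat) (lam * z 3%nat))
                a b (mkpt t r x y))).
Proof.
intros lo hi phi v al1 al2 Q Hreg HQc _ alpha HODE t0 r0 Ht0 Ha0.
destruct (in_I_open lo hi t0 Ht0) as [e1 He1].
set (A := fun r => al1 t0 + al2 t0 * Q r).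
assert (HAc : forall r, continuous A r).
{ intro r. apply (continuous_plus (fun _ => al1 t0) (fun r => al2 t0 * Q r)).
  apply continuous_const. apply (continuous_mult (fun _ => al2 t0) Q).
  apply continuous_const. apply HQc. }
assert (HA0 : A r0 <> 0) by exact Ha0.
assert (Hc : 0 < Rabs (A r0)) by (apply Rabs_pos_lt; auto).
destruct (cont_eps A r0 (HAc r0) (mkposreal _ Hc)) as [e2 He2]. simpl in He2.
assert (He : 0 < Rmin e1 e2) by (apply Rmin_pos; apply cond_pos).
set (e := Rmin e1 e2).
pose proof (Rmin_l e1 e2) as Hm1. pose proof (Rmin_r e1 e2) as Hm2. fold e in Hm1, Hm2. assert (He0 : 0 < e) by exact He. clearbody e.
assert (HtI : forall t, Rabs (t - t0) < e -> in_I lo hi t) by (intros; apply He1; lra).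
assert (HAnz : forall r, Rabs (r - r0) < e -> A r <> 0).
{ intros r Hr Hz. specialize (He2 r ltac:(lra)). rewrite Hz, Rminus_0_l, Rabs_Ropp in He2. lra. }
set (w := fun s => / (sqrt (v s) * (phi s * sqrt (phi s)))).
assert (Hw : forall s, in_I lo hi s -> 0 < w s /\ ex_derive w s).
{ intros s Hs. destruct (Hreg s Hs) as [Hp [Hv [Hdp [Hdv _]]]].
  assert (0 < sqrt (v s)) by (apply sqrt_lt_R0; auto).
  assert (0 < sqrt (phi s)) by (apply sqrt_lt_R0; auto).
  split.
  - unfold w. apply Rinv_0_lt_compat. apply Rmult_lt_0_compat; auto. apply Rmult_lt_0_compat; auto.
  - unfold w. auto_derive. nzs. }
set (T := fun t => RInt w t0 t).
assert (HTd : forall t, Rabs (t - t0) < e -> is_derive T t (w t)).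
{ intros t Ht. apply (is_derive_RInt (V:=R_CompleteNormedModule) w T t0 t).
  - assert (Hd : 0 < e - Rabs (t - t0)) by lra. exists (mkposreal _ Hd). intros b Hb.
    change (Rabs (b - t) < e - Rabs (t - t0)) in Hb.
    assert (Hb0 : Rabs (b - t0) < e).
    { replace (b - t0) with ((b - t) + (t - t0)) by ring.
      pose proof (Rabs_triang (b - t) (t - t0)). lra. }
    unfold T. apply RInt_correct. apply ex_RInt_continuous. intros z Hz.
    assert (Hz0 : Rabs (z - t0) < e).
    { apply (ball_between t0 e t0 b); auto. rewrite Rminus_eq_0, Rabs_R0; lra. }
    exact (ex_derive_continuous w z (proj2 (Hw z (HtI z Hz0)))).
  - exact (ex_derive_continuous w t (proj2 (Hw t (HtI t Ht)))). }
set (Rr := fun r => RInt A r0 r).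
assert (HRd : forall r, is_derive Rr r (A r)).
{ intros r. apply (is_derive_RInt (V:=R_CompleteNormedModule) A Rr r0 r).
  - exists (mkposreal _ Rlt_0_1). intros b _. unfold Rr. apply RInt_correct.
    apply ex_RInt_continuous. intros z _. apply HAc.
  - apply HAc. }
set (C := fun r => (Derive al1 t0 + Derive al2 t0 * Q r) / w t0).
assert (Hal : forall t r, Rabs (t - t0) < e -> alpha t r = A r + C r * T t).
{ intros t r Ht.
  set (D := fun s => Derive al1 s + Derive al2 s * Q r).
  set (G := fun s => D s * (sqrt (v s) * (phi s * sqrt (phi s)))).
  assert (HG : forall s, Rabs (s - t0) < e -> is_derive G s 0).
  { intros s Hs. pose proof (HtI s Hs) as Hi.
    destruct (Hreg s Hi) as [Hp [Hv [Hdp [Hdv [Ha1 [Hda1 [Ha2 Hda2]]]]]]].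
    pose proof (HODE s r Hi) as Ho.
    assert (E1 : Derive (fun s0 => alpha s0 r) s = D s).
    { unfold alpha, D. apply is_derive_unique. auto_derive; [nzs | etaN; ring]. }
    assert (E2 : Derive (Derive (fun s0 => alpha s0 r)) s = Derive D s).
    { apply Derive_ext_loc. destruct (in_I_open lo hi s Hi) as [d Hd]. exists d. intros u Hu.
      change (Rabs (u - s) < d) in Hu. specialize (Hd u Hu).
      destruct (Hreg u Hd) as [_ [_ [_ [_ [Hu1 [_ [Hu2 _]]]]]]].
      unfold alpha, D. apply is_derive_unique. auto_derive; [nzs | etaN; ring]. }
    assert (E3 : Derive D s = Derive (Derive al1) s + Derive (Derive al2) s * Q r).
    { unfold D. apply is_derive_unique. auto_derive; [nzs | etaN; ring]. }
    rewrite E1, E2, E3 in Ho.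
    assert (Hsv0 : 0 < sqrt (v s)) by (apply sqrt_lt_R0; auto).
    assert (Hsp0 : 0 < sqrt (phi s)) by (apply sqrt_lt_R0; auto).
    assert (HeG : ex_derive G s) by (unfold G, D; auto_derive; nzs).
    replace 0 with (Derive G s) by (unfold G, D; der1; etaN;
      set (sv := sqrt (v s)) in *; set (sp := sqrt (phi s)) in *;
      assert (Hsv : sv * sv = v s) by (apply sqrt_sqrt; lra);
      assert (Hsp : sp * sp = phi s) by (apply sqrt_sqrt; lra);
      unfold D in Ho; rewrite <- Hsv, <- Hsp in Ho; try rewrite <- Hsv; try rewrite <- Hsp;
      match type of Ho with ?L = 0 =>
        transitivity (L * (sp / (2 * sv))); [field; nzs | rewrite Ho; ring] end).
    apply Derive_correct. exact HeG. }
  pose proof (const_ball G t0 e HG) as HGc.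
  set (F := fun s => alpha s r - C r * T s).
  assert (HF : forall s, Rabs (s - t0) < e -> is_derive F s 0).
  { intros s Hs. pose proof (HtI s Hs) as Hi.
    destruct (Hreg s Hi) as [Hp [Hv [Hdp [Hdv [Ha1 [Hda1 [Ha2 Hda2]]]]]]].
    destruct (Hreg t0 Ht0) as [Hp0 [Hv0 _]].
    assert (Hd1 : is_derive (fun s0 => alpha s0 r) s (D s))
      by (unfold alpha, D; auto_derive; [nzs | etaN; ring]).
    assert (Hd2 : is_derive (fun s0 => C r * T s0) s (C r * w s))
      by (apply is_derive_scal, HTd, Hs).
    assert (Hsv0 : 0 < sqrt (v s)) by (apply sqrt_lt_R0; auto).
    assert (Hsp0 : 0 < sqrt (phi s)) by (apply sqrt_lt_R0; auto).
    assert (Hsv1 : 0 < sqrt (v t0)) by (apply sqrt_lt_R0; auto).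
    assert (Hsp1 : 0 < sqrt (phi t0)) by (apply sqrt_lt_R0; auto).
    assert (HDw : D s = C r * w s).
    { pose proof (HGc s Hs) as Hg. unfold G in Hg.
      replace (C r * w s) with (D t0 * (sqrt (v t0) * (phi t0 * sqrt (phi t0)))
          / (sqrt (v s) * (phi s * sqrt (phi s)))) by (unfold C, w, D; field; nzs).
      apply (Rmult_eq_reg_r (sqrt (v s) * (phi s * sqrt (phi s)))); [| nzs].
      rewrite Hg. field. nzs. }
    replace 0 with (D s - C r * w s) by (rewrite HDw; ring).
    exact (is_derive_minus _ _ s _ _ Hd1 Hd2). }
  pose proof (const_ball F t0 e HF t Ht) as HFt. unfold F in HFt.
  assert (HT0 : T t0 = 0) by (unfold T; rewrite RInt_point; reflexivity).
  rewrite HT0 in HFt. change (alpha t0 r) with (A r) in HFt. lra. }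
assert (HTinj : forall u1 u2, Rabs (u1 - t0) < e -> Rabs (u2 - t0) < e -> T u1 = T u2 -> u1 = u2).
{ apply (inj_ball T w t0 e HTd). intros u Hu. pose proof (proj1 (Hw u (HtI u Hu))). lra. }
assert (HRinj : forall u1 u2, Rabs (u1 - r0) < e -> Rabs (u2 - r0) < e -> Rr u1 = Rr u2 -> u1 = u2)
  by (apply (inj_ball Rr A r0 e (fun u _ => HRd u) HAnz)).
assert (PT : forall t, Rabs (t - t0) < e -> phi (inv_on T t0 e (T t)) = phi t)
  by (intros t Ht; rewrite inv_on_spec; auto).
assert (QR : forall r, Rabs (r - r0) < e ->
   C (inv_on Rr r0 e (Rr r)) / A (inv_on Rr r0 e (Rr r)) = C r / A r)
  by (intros r Hr; rewrite inv_on_spec; auto).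
exists e, T, Rr, (fun s => phi (inv_on T t0 e s)),
  (fun s => C (inv_on Rr r0 e s) / A (inv_on Rr r0 e s)), 1, 1.
cbv beta.
split; [exact He0|]. split; [lra|]. split; [lra|]. split; [|split].
- intros t Ht. pose proof (HtI t Ht) as Hi. split; [exact Hi|].
  split; [exists (w t); apply HTd; auto|].
  rewrite (is_derive_unique _ _ _ (HTd t Ht)). split; [pose proof (proj1 (Hw t Hi)); lra|].
  rewrite PT by auto. split; [apply (Hreg t Hi) | ring].
- intros r Hr. split; [exists (A r); apply HRd|].
  rewrite (is_derive_unique _ _ _ (HRd r)). apply HAnz; auto.
- intros t r x y Ht Hr a b Ha Hb.
  pose proof (Hal t r Ht) as Hat. pose proof (PT t Ht) as PTt. pose proof (QR r Hr) as QRr.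
  pose proof (HtI t Ht) as Hi.
  destruct (Hreg t Hi) as [Hp [Hv _]].
  pose proof (HAnz r Hr) as HAr.
  assert (DT : Derive T t = / (sqrt (v t) * (phi t * sqrt (phi t))))
    by (apply is_derive_unique; apply HTd; auto).
  assert (DR : Derive Rr r = A r) by (apply is_derive_unique; apply HRd).
  assert (DM : forall z, Derive (Rmult 1) z = 1).
  { intro z. apply is_derive_unique. change (Rmult 1) with (fun s => 1 * s). auto_derive; [nzs | ring]. }
  clearbody alpha T Rr C A.
  assert (Hsv0 : 0 < sqrt (v t)) by (apply sqrt_lt_R0; auto).
  assert (Hsp0 : 0 < sqrt (phi t)) by (apply sqrt_lt_R0; auto).
  assert (Hsv : sqrt (v t) * sqrt (v t) = v t) by (apply sqrt_sqrt; lra).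
  assert (Hsp : sqrt (phi t) * sqrt (phi t) = phi t) by (apply sqrt_sqrt; lra).
  destruct a as [|[|[|[|a]]]]; [..|lia]; destruct b as [|[|[|[|b]]]]; try lia;
  unfold pullback, sum4, pd, upd, metricB, metricA; simpl;
  etaN; rewrite ?DT, ?DR; repeat der1; rewrite ?DM, ?PTt, ?QRr, ?Hat;
  set (sv := sqrt (v t)) in *; set (sp := sqrt (phi t)) in *;
  try rewrite <- Hsv; try rewrite <- Hsp; field; nzs.
Qed.

Theorem mainTheorem7 :
  (* (a) *)
  (forall (lo hi : Rbar) (phi Q : R -> R),
     (forall t, in_I lo hi t ->
        0 < phi t /\ ex_derive phi t /\ ex_derive (Derive phi) t) ->
     (forall r, ex_derive Q r /\ ex_derive (Derive Q) r) ->
     forall t r x y, in_I lo hi t -> t * Q r + 1 <> 0 ->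
       perfect_fluid_at (metricA phi Q) (uA phi) (rhoA phi Q) (pA phi)
         (mkpt t r x y))
  /\
  (* (b) *)
  (forall (lo hi : Rbar) (phi v al1 al2 Q : R -> R),
     (forall t, in_I lo hi t ->
        0 < phi t /\ 0 < v t /\ ex_derive phi t /\ ex_derive v t /\
        ex_derive al1 t /\ ex_derive (Derive al1) t /\
        ex_derive al2 t /\ ex_derive (Derive al2) t) ->
     (forall r, continuous Q r) ->
     (exists t1 t2, in_I lo hi t1 /\ in_I lo hi t2 /\ al2 t1 <> al2 t2) ->
     let alpha := fun t r => al1 t + al2 t * Q r in
     (forall t r, in_I lo hi t ->
        2 * v t * phi t * Derive (Derive (fun s => alpha s r)) t
        + (Derive v t * phi t + 3 * v t * Derive phi t)
          * Derive (fun s => alpha s r) t = 0) ->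
     forall t0 r0, in_I lo hi t0 -> alpha t0 r0 <> 0 ->
     exists eps (T Rr phit Qt : R -> R) (k lam : R),
       0 < eps /\ 0 < k /\ 0 < lam /\
       (forall t, Rabs (t - t0) < eps ->
          in_I lo hi t /\ ex_derive T t /\ Derive T t <> 0 /\
          0 < phit (T t) /\ phit (T t) = k * phi t) /\
       (forall r, Rabs (r - r0) < eps -> ex_derive Rr r /\ Derive Rr r <> 0) /\
       (forall t r x y, Rabs (t - t0) < eps -> Rabs (r - r0) < eps ->
          forall a b, (a < 4)%nat -> (b < 4)%nat ->
            metricB v phi alpha a b (mkpt t r x y)
            = pullback (metricA phit Qt)
                (fun z => mkpt (T (z 0%nat)) (Rr (z 1%nat)) (lam * z 2%nat) (lam * z 3%nat))
                a b (mkpt t r x y))).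
Proof.
split; [exact partA | exact partB].
Qed.
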